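(* For any $u\le\beta$, the relative cycles $(C_c)_{c\in J_{u,\beta}}$ form a $\mathbb Z$-basis of $\Lambda_{u,\beta}=H_1(\mathbf S_{u,\beta},\mathbb M;\mathbb Z)$.
   Context: Notation: $n\ge2$, $I=\{1,\dots,n-1\}$, $\pm I=I\sqcup(-I)$; permutations composed as functions, $s_i=(i\ i+1)$, Bruhat order $\le$, Demazure product $*$. Double braid word $\beta=(i_1,\dots,i_m)\in(\pm I)^m$; $s_i^+=s_i,s_i^-=\mathrm{id}$ if $i>0$, $s_i^+=\mathrm{id},s_i^-=s_{-i}$ if $i<0$; $u\le\beta$ means $u\le s^-_{i_m}*\dots*s^-_{i_1}*s^+_{i_1}*\dots*s^+_{i_m}$. $s_i\rhd u=s_iu$ if $s_iu<u$ else $u$; $u\lhd s_i=us_i$ if $us_i<u$ else $u$; identity acts trivially. $u_{(m)}=u$, $u_{(c-1)}=s^-_{i_c}\rhd u_{(c)}\lhd s^+_{i_c}$; $J_{u,\beta}=\{c:u_{(c)}=u_{(c-1)}\}$ (solid), others hollow. Graph $G_{u,\beta}$ in $\mathbb R^3$ ($(i,j,t)$): dots $(i,u_{(c)}(i),c)$; strands time $c-1\to c$: unchanged if $c$ solid; rows $j,j+1$ swapped if $c$ hollow with $i_c=j>0$; columns $i,i+1$ swapped if hollow with $i_c=-i$. Solid $c$ with $i_c=j>0$, dots $(i,j),(i',j+1)$ ($i<i'$): black $p$ on the strand through $(i,j)$, white $q$ on that through $(i',j+1)$ at time $c-\frac12$, bridge $b_c=pq$; solid $c$ with $i_c=-i$,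 dots $(i,j),(i+1,j')$ ($j<j'$): white $p$ through $(i,j)$, black $q$ through $(i+1,j')$. Start $p$, end $q$. Vertices: bridge endpoints and strand ends at $t=0,m$; edges: bridges and strand pieces. Cyclic orders counterclockwise at white, clockwise at black vertices, in the projection $(i,j,t)\mapsto(t,j)$. $\mathbf S_{u,\beta}$: thickened oriented surface; $\mathbb M$: $n$ marked boundary points from the time-$0$ ends. Relative cycles: monotone curves in $\Gamma(z)=\{(i,z(i))\}$ (strictly increasing coordinates, dot endpoints, no other dots), multicurves ordered componentwise. For $c\in J$, $\gamma^{c,c-1}$ joins the two dots on the strands of $b_c$; from $r$ to $r-1$: hollow $r$: continuous deformation keeping dots on the same side as their strand-mates; solid $r$ with $i_r=j>0$: with $D,D'$ the dots in rows $j,j+1$, delete the part strictly between $D,D'$ of each curve passing weakly above $D$ and weakly below $D'$; solid $r$ with $i_r=-i$: $D,D'$ in columns $i,i+1$, same for curves weakly right of $D$ and weakly left of $D'$. These sweep, with $b_c$, a disk $D_c$ whose boundary consists of edges of $G_{u,\beta}$ and $\gamma^{c,0}$. $C_c=\partial D_c\setminus\gamma^{c,0}$ (a cycle or a union of paths ending at marked points), oriented so $b_c$ runs from start to end, viewed in $\Lambda_{u,\beta}$. *)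

(* Defs.v *)
From HB Require Import structures.
From mathcomp Require Import all_boot all_order all_fingroup all_algebra.
Set Implicit Arguments.
Unset Strict Implicit.
Unset Printing Implicit Defensive.
Import GRing.Theory Num.Theory.

(* Conventions:
   - points / columns / rows are 0-based: 'I_n ; the paper's s_k (k in 1..n-1)
     is tperm (k-1) k ;
   - the paper's product "u v" is mathcomp's (u * v)%g, i.e. (u*v) x = v (u x);
     this is the only reading under which the algebraic recursion for u_(c)
     matches the geometric description of G_{u,beta} (positive letters swap
     rows, negative letters swap columns);
   - dots at time t are (i, u_(t) i) for columns i : 'I_n. *)

Local Open Scope ring_scope.

Section Defs.
Variable n : nat.

Definition perm_len (w : {perm 'I_n}) : nat :=
  #|[set p : 'I_n * 'I_n | (p.1 < p.2)%N && (w p.2 < w p.1)%N]|.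

Definition bruhat_step (x y : {perm 'I_n}) : bool :=
  [exists a : 'I_n, exists b : 'I_n, (a != b) && (y == (x * tperm a b)%g)]
  && (perm_len x < perm_len y)%N.
Definition bruhat_le (x y : {perm 'I_n}) : bool := connect bruhat_step x y.
Definition bruhat_lt (x y : {perm 'I_n}) : bool := (x != y) && bruhat_le x y.

Definition sref (k : nat) : {perm 'I_n} :=
  match (insub k.-1 : option 'I_n), (insub k : option 'I_n) with
  | Some a, Some b => if (0 < k)%N then tperm a b else 1%g
  | _, _ => 1%g
  end.

Definition valid_letter (x : int) : bool := (x != 0) && (absz x < n)%N.

Definition plus_refl (x : int) : {perm 'I_n} := if 0 < x then sref (absz x) else 1%g.
Definition minus_refl (x : int) : {perm 'I_n} := if x < 0 then sref (absz x) else 1%g.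

Definition dem (w s : {perm 'I_n}) : {perm 'I_n} :=
  if bruhat_lt w (w * s)%g then (w * s)%g else w.
Definition demazure (l : seq {perm 'I_n}) : {perm 'I_n} := foldl dem 1%g l.

Definition demazure_beta (beta : seq int) : {perm 'I_n} :=
  demazure (map minus_refl (rev beta) ++ map plus_refl beta).

Definition u_le_beta (u : {perm 'I_n}) (beta : seq int) : bool :=
  bruhat_le u (demazure_beta beta).

Definition ldesc (s w : {perm 'I_n}) : {perm 'I_n} :=
  if bruhat_lt (s * w)%g w then (s * w)%g else w.
Definition rdesc (w s : {perm 'I_n}) : {perm 'I_n} :=
  if bruhat_lt (w * s)%g w then (w * s)%g else w.

Definition ustep (x : int) (w : {perm 'I_n}) : {perm 'I_n} :=
  ldesc (minus_refl x) (rdesc w (plus_refl x)).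

Variable u : {perm 'I_n}.
Variable beta : seq int.

Definition m := size beta.

Definition uat (c : nat) : {perm 'I_n} := foldr ustep u (drop c beta).

(* c-th letter, 1-based *)
Definition letter (c : nat) : int := nth 0 beta c.-1.

(* c is solid, i.e. c \in J_{u,beta} *)
Definition solid (c : nat) : bool := (1 <= c <= m)%N && (uat c == uat c.-1).

(* strand piece (c, x) (top dot: column x at time c) has its lower end at
   column sigma c x at time c-1 *)
Definition sigma (c : nat) (x : 'I_n) : 'I_n :=
  if (~~ solid c) && (letter c < 0) then sref (absz (letter c)) x else x.

(* columns (at time c) of the start and end of the bridge b_c (c solid);
   these are also the columns of the dots D, D' used in the sweep at step c *)
Definition bridge_ends (c : nat) : option ('I_n * 'I_n) :=
  let x := letter c in
  let z := uat c in
  match (insub (absz x).-1 : option 'I_n), (insub (absz x) : option 'I_n) with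
  | Some r1, Some r2 =>
      if 0 < x then Some (((z^-1)%g r1), ((z^-1)%g r2)) else Some (r1, r2)
  | _, _ => None
  end.

(* Edges: ELow c x : lower half of strand piece (c,x), from dot (c-1, sigma c x)
          to the midpoint mid(c,x) (time c-1/2);
          EUp c x  : upper half, from mid(c,x) to dot (c, x);
          EBr c    : bridge b_c, from its start to its end (c solid).
   Strand edges are oriented upward in time. *)
Inductive edge := ELow of nat & 'I_n | EUp of nat & 'I_n | EBr of nat.

Record chain := Chain {
  clow : nat -> 'I_n -> int;
  cupp : nat -> 'I_n -> int;
  cbr  : nat -> int }.

Definition zero_chain : chain := Chain (fun _ _ => 0) (fun _ _ => 0) (fun _ => 0).

Definition chain_eq (f g : chain) : Prop :=
  [/\ forall c x, clow f c x = clow g c x,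
      forall c x, cupp f c x = cupp g c x
    & forall c, cbr f c = cbr g c].

(* boundary contribution of the bridge at the midpoint vertex mid(c,x) *)
Definition bterm (f : chain) (c : nat) (x : 'I_n) : int :=
  match bridge_ends c with
  | Some (p, q) =>
      if solid c then (if x == q then cbr f c else 0) - (if x == p then cbr f c else 0)
      else 0
  | None => 0
  end.

(* relative 1-cycles of (G, {strand ends at time 0}): chains supported on
   actual edges whose boundary vanishes at every unmarked vertex.  Since G is
   a graph (no 2-cells), these form H_1(G, M) = H_1(S_{u,beta}, M; Z). *)
Definition relcyc (f : chain) : Prop :=
  [/\ forall c x, ~~ (1 <= c <= m)%N -> clow f c x = 0,
      forall c x, ~~ (1 <= c <= m)%N -> cupp f c x = 0,
      forall c, ~~ solid c -> cbr f c = 0,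
      (* dot vertices at times 1..m *)
      forall t x, (1 <= t <= m)%N ->
        cupp f t x = (if (t < m)%N then clow f t.+1 (sigma t.+1 x) else 0)
    & (* midpoint vertices (bridge endpoints) *)
      forall c x, (1 <= c <= m)%N -> clow f c x - cupp f c x + bterm f c x = 0].

(* A monotone curve in Gamma(z) from the dot in column cst to the dot in column
   cen (cst < cen, z cst < z cen), up to isotopy rel dots: cset = set of columns
   of the dots strictly inside its bounding box lying on its upper-left side. *)
Record curve := Curve { cst : 'I_n; cen : 'I_n; cset : {set 'I_n} }.

Definition isUL (z : {perm 'I_n}) (g : curve) (x : 'I_n) : bool :=
  if (x < cst g)%N then true
  else if (cen g < x)%N then false
  else if (z x < z (cst g))%N then false
  else if (z (cen g) < z x)%N then true
  else x \in cset g.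

(* solid step c: test whether the curve passes weakly above D and weakly below
   D' (positive letter), resp. weakly right of D and weakly left of D'
   (negative letter); if so, return the pieces left after deleting the part
   strictly between D and D' (degenerate one-point pieces dropped). *)
Definition cut (c : nat) (g : curve) : option (seq curve) :=
  let z := uat c in
  match bridge_ends c with
  | Some (d, d') =>
      let cond :=
        if 0 < letter c then
          [&& (z (cst g) <= z d)%N, (z d' <= z (cen g))%N,
              (d == cst g) || ~~ isUL z g d & (d' == cen g) || isUL z g d']
        else
          [&& (cst g <= d)%N, (d' <= cen g)%N,
              (d == cst g) || isUL z g d & (d' == cen g) || ~~ isUL z g d'] in
      if cond then
        Some ((if d != cst g then [:: Curve (cst g) d (cset g)] else [::]) ++
              (if d' != cen g then [:: Curve d' (cen g) (cset g)] else [::]))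
      else None
  | None => None
  end.

(* hollow step c: continuous deformation keeping each dot on the same side as
   its strand-mate *)
Definition deform (c : nat) (g : curve) : curve :=
  let z := uat c in
  if 0 < letter c then Curve (cst g) (cen g) [set y | isUL z g y]
  else let s := sref (absz (letter c)) in
       Curve (s (cst g)) (s (cen g)) [set y | isUL z g (s y)].

(* one step from time c to time c-1 for a single curve: new curves and the
   edge contributions to the boundary of the swept disk (lower-left endpoint
   trajectories counted +1, upper-right ones -1, deleted segments give the
   bridge with coefficient -1) *)
Definition stepc (c : nat) (g : curve) : seq curve * seq (edge * int) :=
  let up := [:: (EUp c (cst g), 1); (EUp c (cen g), -1)] in
  if solid c then
    let ps := if cut c g is Some ps then ps else [:: g] in
    let br := if cut c g is Some _ then [:: (EBr c, -1)] else [::] in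
    (ps, up ++ br ++ flatten [seq [:: (ELow c (cst h), 1); (ELow c (cen h), -1)] | h <- ps])
  else ([:: deform c g], up ++ [:: (ELow c (cst g), 1); (ELow c (cen g), -1)]).

Definition stepall (c : nat) (cs : seq curve) : seq curve * seq (edge * int) :=
  (flatten [seq (stepc c g).1 | g <- cs], flatten [seq (stepc c g).2 | g <- cs]).

Fixpoint sweep (r : nat) (cs : seq curve) : seq (edge * int) :=
  match r with
  | 0 => [::]
  | r'.+1 => (stepall r'.+1 cs).2 ++ sweep r' (stepall r'.+1 cs).1
  end.

Definition Ccontrib (c : nat) : seq (edge * int) :=
  if solid c then
    match bridge_ends c with
    | Some (p, q) =>
        [:: (EBr c, 1); (ELow c p, 1); (ELow c q, -1)] ++ sweep c.-1 [:: Curve p q set0]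
    | None => [::]
    end
  else [::].

Definition of_contrib (l : seq (edge * int)) : chain :=
  Chain
    (fun c x => \sum_(e <- l)
        match e.1 with ELow c' x' => if (c' == c) && (x' == x) then e.2 else 0 | _ => 0 end)
    (fun c x => \sum_(e <- l)
        match e.1 with EUp c' x' => if (c' == c) && (x' == x) then e.2 else 0 | _ => 0 end)
    (fun c => \sum_(e <- l)
        match e.1 with EBr c' => if c' == c then e.2 else 0 | _ => 0 end).

Definition Ccyc (c : nat) : chain := of_contrib (Ccontrib c).

Definition lincomb (a : nat -> int) : chain :=
  Chain
    (fun c' x => \sum_(1 <= c < m.+1 | solid c) a c * clow (Ccyc c) c' x)
    (fun c' x => \sum_(1 <= c < m.+1 | solid c) a c * cupp (Ccyc c) c' x)
    (fun c' => \sum_(1 <= c < m.+1 | solid c) a c * cbr (Ccyc c) c').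

End Defs.

(* Main.v *)
Require Import Defs.
From HB Require Import structures.
From mathcomp Require Import all_boot all_order all_fingroup all_algebra ring zify.
Set Implicit Arguments. Unset Strict Implicit. Unset Printing Implicit Defensive.
Import Order.TTheory GRing.Theory Num.Theory.
Local Open Scope ring_scope.

Section P.
Variable n : nat.
Variable u : {perm 'I_n}.
Variable beta : seq int.

Definition ind (b : bool) : int := if b then 1 else 0.
Definition lowE (e : edge n * int) t x : int :=
  match e.1 with ELow c' x' => if (c' == t) && (x' == x) then e.2 else 0 | _ => 0 end.
Definition uppE (e : edge n * int) t x : int :=
  match e.1 with EUp c' x' => if (c' == t) && (x' == x) then e.2 else 0 | _ => 0 end.
Definition brE (e : edge n * int) t : int :=
  match e.1 with EBr c' => if c' == t then e.2 else 0 | _ => 0 end.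
Definition lows l t x := \sum_(e <- l) lowE e t x.
Definition upps l t x := \sum_(e <- l) uppE e t x.
Definition brs l t := \sum_(e <- l) brE e t.

Lemma clowE l t x : clow (of_contrib l) t x = lows l t x. Proof. by []. Qed.
Lemma cuppE l t x : cupp (of_contrib l) t x = upps l t x. Proof. by []. Qed.
Lemma cbrE l t : cbr (of_contrib l) t = brs l t. Proof. by []. Qed.

Definition ep (cs : seq (curve n)) x := \sum_(g <- cs) (ind (cst g == x) - ind (cen g == x)).

Definition bcoef c x : int :=
  match bridge_ends u beta c with
  | Some (p, q) => if solid u beta c then ind (x == q) - ind (x == p) else 0
  | None => 0 end.

Lemma btermE f c x : bterm u beta f c x = cbr f c * bcoef c x.
Proof.
rewrite /bterm /bcoef; case: bridge_ends => [[p q]|]; last by rewrite mulr0.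
case: solid; last by rewrite mulr0.
by rewrite mulrBr /ind; case: eqP; case: eqP => *; rewrite ?mulr1 ?mulr0.
Qed.

Lemma sref0 : sref n 0 = 1%g.
Proof. by rewrite /sref; case: (insub _) => [a|] //; case: (insub _). Qed.

Lemma srefK k x : sref n k (sref n k x) = x.
Proof.
rewrite /sref; case: (insub k.-1) => [a|]; last by rewrite !perm1.
case: (insub k) => [b|]; last by rewrite !perm1.
by case: ifP => _; rewrite ?tpermK ?perm1.
Qed.

Lemma sigmaK c x : sigma u beta c (sigma u beta c x) = x.
Proof. by rewrite /sigma; case: (~~ solid u beta c && _); rewrite ?srefK. Qed.

Lemma sigma_solid c x : solid u beta c -> sigma u beta c x = x.
Proof. by rewrite /sigma => ->. Qed.

Lemma lows_cat l1 l2 t x : lows (l1 ++ l2) t x = lows l1 t x + lows l2 t x.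
Proof. by rewrite /lows big_cat. Qed.
Lemma upps_cat l1 l2 t x : upps (l1 ++ l2) t x = upps l1 t x + upps l2 t x.
Proof. by rewrite /upps big_cat. Qed.
Lemma brs_cat l1 l2 t : brs (l1 ++ l2) t = brs l1 t + brs l2 t.
Proof. by rewrite /brs big_cat. Qed.
Lemma ep_cat l1 l2 x : ep (l1 ++ l2) x = ep l1 x + ep l2 x.
Proof. by rewrite /ep big_cat. Qed.

Definition lowpart c (ps : seq (curve n)) :=
  flatten [seq [:: (ELow c (cst h), 1%:Z); (ELow c (cen h), -1)] | h <- ps].

Lemma lowpart_low c ps t x : lows (lowpart c ps) t x = if c == t then ep ps x else 0.
Proof.
elim: ps => [|h ps IH]; first by rewrite /lows /ep !big_nil; case: eqP.
rewrite /lowpart /= {1}/lows !big_cons -/(lowpart c ps) -/(lows _ t x) IH /ep big_cons.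
rewrite /lowE /=.
case: (c == t) => //=; rewrite /ind; case: (cst h == x); case: (cen h == x); ring.
Qed.
Lemma lowpart_upp c ps t x : upps (lowpart c ps) t x = 0.
Proof.
elim: ps => [|h ps IH]; first by rewrite /upps big_nil.
by rewrite /lowpart /= {1}/upps !big_cons -/(lowpart c ps) -/(upps _ t x) IH.
Qed.
Lemma lowpart_br c ps t : brs (lowpart c ps) t = 0.
Proof.
elim: ps => [|h ps IH]; first by rewrite /brs big_nil.
by rewrite /lowpart /= {1}/brs !big_cons -/(lowpart c ps) -/(brs _ t) IH.
Qed.

End P.


Section P.
Variable n : nat.
Variable u : {perm 'I_n}.
Variable beta : seq int.

Lemma deform_eq c g y : ~~ solid u beta c ->
  ((cst (deform u beta c g) == sigma u beta c y) = (cst g == y)) /\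
  ((cen (deform u beta c g) == sigma u beta c y) = (cen g == y)).
Proof.
rewrite /deform /sigma => /negPf -> /=.
case: (ltgtP (letter beta c) 0) => [hl|hl|->] /=.
- by rewrite !(inj_eq (@perm_inj _ _)).
- by [].
- by rewrite sref0 !perm1.
Qed.

Lemma stepc_low c g t x : lows (stepc u beta c g).2 t x =
  if c == t then ep (stepc u beta c g).1 (sigma u beta c x) else 0.
Proof.
rewrite /stepc; case hs: (solid u beta c).
  rewrite (sigma_solid _ hs).
  case: (cut u beta c g) => [ps|] /=.
    by rewrite /lows !big_cons -/(lowpart c ps) -/(lows _ t x) lowpart_low /lowE /= !add0r.
  rewrite /lows /ep !big_cons !big_nil /lowE /= !add0r.
  by case: (c == t) => //=; rewrite /ind; case: (cst g == x); case: (cen g == x); ring.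
have [e1 e2] := deform_eq g x (negbT hs).
rewrite /= /lows /ep !big_cons !big_nil /lowE /= !add0r e1 e2.
by case: (c == t) => //=; rewrite /ind; case: (cst g == x); case: (cen g == x); ring.
Qed.

Lemma stepc_upp c g t x : upps (stepc u beta c g).2 t x =
  if c == t then ind (cst g == x) - ind (cen g == x) else 0.
Proof.
rewrite /stepc; case hs: (solid u beta c).
  case: (cut u beta c g) => [ps|] /=.
    rewrite /upps !big_cons -/(lowpart c ps) -/(upps _ t x) lowpart_upp /uppE /= !addr0.
    by case: (c == t) => //=; rewrite /ind; case: (cst g == x); case: (cen g == x); ring.
  rewrite /upps !big_cons !big_nil /uppE /= !addr0.
  by case: (c == t) => //=; rewrite /ind; case: (cst g == x); case: (cen g == x); ring.
rewrite /= /upps !big_cons !big_nil /uppE /= !addr0.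
by case: (c == t) => //=; rewrite /ind; case: (cst g == x); case: (cen g == x); ring.
Qed.

Lemma stepc_br c g t : (c != t) || ~~ solid u beta c -> brs (stepc u beta c g).2 t = 0.
Proof.
rewrite /stepc; case hs: (solid u beta c) => /= h.
  rewrite orbF in h.
  case: (cut u beta c g) => [ps|] /=.
    by rewrite /brs !big_cons -/(lowpart c ps) -/(brs _ t) lowpart_br /brE /= (negbTE h) !addr0.
  by rewrite /brs !big_cons !big_nil /brE /=.
by rewrite /brs !big_cons !big_nil /brE /=.
Qed.


Lemma cut_spec c g : cut u beta c g = None \/ exists d d',
  bridge_ends u beta c = Some (d, d') /\
  cut u beta c g = Some ((if d != cst g then [:: Curve (cst g) d (cset g)] else [::]) ++
              (if d' != cen g then [:: Curve d' (cen g) (cset g)] else [::])).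
Proof.
rewrite /cut; case: bridge_ends => [[d d']|]; last by left.
rewrite /=; case: ifP => _; last by left.
by right; exists d, d'.
Qed.

Lemma stepc_bal c g x : lows (stepc u beta c g).2 c x - upps (stepc u beta c g).2 c x
   + brs (stepc u beta c g).2 c * bcoef u beta c x = 0.
Proof.
rewrite stepc_low stepc_upp eqxx.
rewrite /stepc; case hs: (solid u beta c); last first.
  have [e1 e2] := deform_eq g x (negbT hs).
  rewrite /= /brs /ep !big_cons !big_nil /brE /= !addr0 mul0r addr0 e1 e2.
  rewrite /ind; case: (cst g == x); case: (cen g == x); ring.
have [e|[d [d' [eb e]]]] := cut_spec c g.
  rewrite e /= (sigma_solid _ hs) /brs /ep !big_cons !big_nil /brE /= !addr0 mul0r addr0.
  rewrite /ind; case: (cst g == x); case: (cen g == x); ring.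
rewrite e /= (sigma_solid _ hs) /bcoef eb hs.
rewrite /brs !big_cons -/(lowpart c _) -/(brs _ c) lowpart_br /brE /= eqxx.
rewrite /ep big_cat /= !addr0.
case: (d =P cst g) => [->|hd]; case: (d' =P cen g) => [->|hd'] /=;
  rewrite ?big_nil ?big_cons ?big_nil /= ?addr0 ?add0r;
  rewrite ?[x == _]eq_sym /ind;
  case: (cst g == x); case: (cen g == x); try case: (d == x); try case: (d' == x); ring.
Qed.


Lemma stepall_low c cs t x : lows (stepall u beta c cs).2 t x =
  if c == t then ep (stepall u beta c cs).1 (sigma u beta c x) else 0.
Proof.
rewrite /stepall /=; elim: cs => [|g cs IH] /=.
  by rewrite /lows /ep !big_nil; case: (c == t).
rewrite lows_cat ep_cat stepc_low IH.
by case: (c == t); rewrite ?addr0.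
Qed.

Lemma stepall_upp c cs t x : upps (stepall u beta c cs).2 t x =
  if c == t then ep cs x else 0.
Proof.
rewrite /stepall /=; elim: cs => [|g cs IH] /=.
  by rewrite /upps /ep !big_nil; case: (c == t).
rewrite upps_cat stepc_upp IH /ep big_cons.
by case: (c == t); rewrite ?addr0.
Qed.

Lemma stepall_br c cs t : (c != t) || ~~ solid u beta c -> brs (stepall u beta c cs).2 t = 0.
Proof.
move=> h; rewrite /stepall /=; elim: cs => [|g cs IH] /=; first by rewrite /brs big_nil.
by rewrite brs_cat (stepc_br _ h) IH.
Qed.

Lemma stepall_bal c cs x : lows (stepall u beta c cs).2 c x - upps (stepall u beta c cs).2 c x
   + brs (stepall u beta c cs).2 c * bcoef u beta c x = 0.
Proof.
rewrite /stepall /=; elim: cs => [|g cs IH] /=.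
  rewrite /lows /upps /brs !big_nil; ring.
rewrite lows_cat upps_cat brs_cat.
have := stepc_bal c g x.
move: IH; set a := lows _ c x; set b := upps _ c x; set d := brs _ c.
set a' := lows _ c x; set b' := upps _ c x; set d' := brs _ c.
move=> h1 h2.
rewrite mulrDl.
have -> : a' + a - (b' + b) + (d' * bcoef u beta c x + d * bcoef u beta c x) =
  (a' - b' + d' * bcoef u beta c x) + (a - b + d * bcoef u beta c x) by ring.
by rewrite h1 h2 addr0.
Qed.


Lemma sweep_inv r cs :
 let S := sweep u beta r cs in
 [/\ forall t x, (t == 0)%N || (r < t)%N -> lows S t x = 0 /\ upps S t x = 0,
     forall t, [|| t == 0%N, (r < t)%N | ~~ solid u beta t] -> brs S t = 0,
     forall t x, (1 <= t < r)%N -> upps S t x = lows S t.+1 (sigma u beta t.+1 x),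
     forall x, (1 <= r)%N -> upps S r x = ep cs x
   & forall t x, (1 <= t <= r)%N -> lows S t x - upps S t x + brs S t * bcoef u beta t x = 0].
Proof.
elim: r cs => [|r IH] cs S.
  split => //; rewrite /S /=.
  - by move=> t x _; rewrite /lows /upps !big_nil.
  - by move=> t _; rewrite /brs !big_nil.
  - by move=> t x; case: t.
  - by move=> t x /andP [h1 h2]; move: (leq_trans h1 h2).
have -> : S = (stepall u beta r.+1 cs).2 ++ sweep u beta r (stepall u beta r.+1 cs).1 by [].
set cs' := (stepall u beta r.+1 cs).1.
have [A B C D E] := IH cs'.
split.
- move=> t x ht; rewrite lows_cat upps_cat stepall_low stepall_upp.
  have -> : (r.+1 == t) = false by apply/negbTE; lia.
  have [-> ->] := A t x (ltac:(lia)).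
  by rewrite addr0.
- move=> t ht; rewrite brs_cat B; last first.
    move: ht; case/or3P => [->//|h|->]; last by rewrite !orbT.
    by rewrite (ltnW h) orbT.
  rewrite stepall_br ?addr0 //.
  move: ht; case/or3P => [/eqP->//|h|h]; first by rewrite neq_ltn h.
  by case: eqP => [->|]; rewrite ?h ?orbT.
- move=> t x ht.
  rewrite upps_cat lows_cat stepall_upp stepall_low.
  have -> : (r.+1 == t) = false by apply/negbTE; lia.
  case: (ltnP t r) => htr.
    have -> : (r.+1 == t.+1) = false by apply/negbTE; lia.
    by rewrite !add0r C //; lia.
  have etr : t = r by lia.
  subst t; rewrite eqxx sigmaK add0r D; last by lia.
  by have [-> _] := A r.+1 (sigma u beta r.+1 x) (ltac:(rewrite ltnSn orbT //)); rewrite addr0.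
- move=> x _; rewrite upps_cat stepall_upp eqxx.
  by have [_ ->] := A r.+1 x (ltac:(rewrite ltnSn orbT //)); rewrite addr0.
- move=> t x ht; rewrite lows_cat upps_cat brs_cat.
  case: (ltnP r t) => htr.
    have etr : t = r.+1 by lia.
    subst t.
    have [-> ->] := A r.+1 x (ltac:(rewrite ltnSn orbT //)).
    rewrite B; last by rewrite ltnSn orbT.
    rewrite !addr0; exact: stepall_bal.
  rewrite stepall_low stepall_upp stepall_br; last first.
    by apply/orP; left; apply/negP => /eqP h; lia.
  have -> : (r.+1 == t) = false by apply/negbTE; lia.
  rewrite /= !add0r; apply: E; lia.
Qed.

End P.

Section P.
Variable n : nat.
Variable u : {perm 'I_n}.
Variable beta : seq int.
Hypothesis hbeta : all (valid_letter n) beta.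

Lemma solid_range c : solid u beta c -> (1 <= c <= m beta)%N.
Proof. by case/andP. Qed.

Lemma bridge_some c : solid u beta c -> exists p q, bridge_ends u beta c = Some (p, q).
Proof.
move=> /solid_range /andP [h1 h2].
have hv : valid_letter n (letter beta c).
  apply: (allP hbeta); rewrite /letter; apply: mem_nth; move: h1 h2; rewrite /m.
  by case: c.
move: hv; rewrite /valid_letter /bridge_ends => /andP [hnz hlt].
case: insubP => [a _ _|/negP hn]; last by exfalso; apply: hn; lia.
case: insubP => [b _ _|/negP hn]; last by exfalso; apply: hn; lia.
by case: ifP => _; eexists; eexists.
Qed.

Definition Ipart c (p q : 'I_n) : seq (edge n * int) := [:: (EBr n c, 1); (ELow c p, 1); (ELow c q, -1)].

Lemma Ipart_low c p q t x : lows (Ipart c p q) t x = if c == t then ind (p == x) - ind (q == x) else 0.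
Proof.
rewrite /lows !big_cons big_nil /lowE /= add0r addr0.
by case: (c == t) => //=; rewrite /ind; case: (p == x); case: (q == x).
Qed.
Lemma Ipart_upp c p q t x : upps (Ipart c p q) t x = 0.
Proof. by rewrite /upps !big_cons big_nil /uppE /= !add0r. Qed.
Lemma Ipart_br c p q t : brs (Ipart c p q) t = if c == t then 1 else 0.
Proof. by rewrite /brs !big_cons big_nil /brE /= !addr0. Qed.

Lemma CcycE c p q : solid u beta c -> bridge_ends u beta c = Some (p, q) ->
  Ccyc u beta c = of_contrib (Ipart c p q ++ sweep u beta c.-1 [:: Curve p q set0]).
Proof. by move=> hs eb; rewrite /Ccyc /Ccontrib hs eb. Qed.

Lemma Ccyc_br_gt c t : (c < t)%N -> cbr (Ccyc u beta c) t = 0.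
Proof.
move=> hct; case hs: (solid u beta c); last by rewrite /Ccyc /Ccontrib hs /= /of_contrib /= big_nil.
have [p [q eb]] := bridge_some hs.
rewrite (CcycE hs eb) cbrE brs_cat Ipart_br.
have -> : (c == t) = false by apply/negbTE; lia.
have [_ B _ _ _] := sweep_inv u beta c.-1 [:: Curve p q set0].
by rewrite B ?add0r //; apply/orP; right; apply/orP; left; lia.
Qed.

Lemma Ccyc_br_eq c : solid u beta c -> cbr (Ccyc u beta c) c = 1.
Proof.
move=> hs; have [p [q eb]] := bridge_some hs.
have hr := solid_range hs.
rewrite (CcycE hs eb) cbrE brs_cat Ipart_br eqxx.
have [_ B _ _ _] := sweep_inv u beta c.-1 [:: Curve p q set0].
by rewrite B ?addr0 //; apply/orP; right; apply/orP; left; lia.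
Qed.


Lemma Ccyc_rel c : solid u beta c -> relcyc u beta (Ccyc u beta c).
Proof.
move=> hs; have [p [q eb]] := bridge_some hs.
have hr := solid_range hs.
rewrite (CcycE hs eb).
have [A B C D E] := sweep_inv u beta c.-1 [:: Curve p q set0].
set S := sweep u beta c.-1 [:: Curve p q set0].
split.
- move=> t x ht; rewrite clowE lows_cat Ipart_low.
  have -> : (c == t) = false by apply/negbTE; lia.
  by have [-> _] := A t x (ltac:(lia)); rewrite addr0.
- move=> t x ht; rewrite cuppE upps_cat Ipart_upp.
  by have [_ ->] := A t x (ltac:(lia)); rewrite addr0.
- move=> t ht; rewrite cbrE brs_cat Ipart_br.
  have -> : (c == t) = false by apply/negbTE; apply: contraNneq ht => <-.
  by rewrite B ?add0r // ht !orbT.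
- move=> t x ht; rewrite cuppE clowE upps_cat Ipart_upp add0r.
  case: (ltnP t c.-1) => h1.
    have -> : (t < m beta)%N by lia.
    rewrite lows_cat Ipart_low.
    have -> : (c == t.+1) = false by apply/negbTE; lia.
    by rewrite add0r C //; lia.
  case: (ltnP c.-1 t) => h2.
    have [_ ->] := A t x (ltac:(lia)).
    case: ifP => // _; rewrite lows_cat Ipart_low.
    have -> : (c == t.+1) = false by apply/negbTE; lia.
    by have [-> _] := A t.+1 (sigma u beta t.+1 x) (ltac:(lia)); rewrite addr0.
  have et : t = c.-1 by lia.
  subst t.
  have -> : (c.-1 < m beta)%N by lia.
  have ec : c.-1.+1 = c by lia.
  rewrite ec D; last by lia.
  rewrite lows_cat Ipart_low eqxx (sigma_solid _ hs).
  have [-> _] := A c x (ltac:(lia)).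
  by rewrite addr0 /ep big_cons big_nil addr0.
- move=> t x ht; rewrite btermE clowE cuppE cbrE lows_cat upps_cat brs_cat Ipart_low Ipart_upp Ipart_br.
  case: (ltnP t c) => h1.
    have -> : (c == t) = false by apply/negbTE; lia.
    rewrite !add0r; apply: E; lia.
  have [A1 A2] := A t x (ltac:(lia)).
  rewrite A1 A2 B ?addr0; last by apply/orP; right; apply/orP; left; lia.
  case: eqP => [et|hne]; last by rewrite mul0r subr0.
  subst t; rewrite /bcoef eb hs eq_sym [q == x]eq_sym /ind.
  by case: (x == p); case: (x == q); ring.
Qed.

End P.

Section P.
Variable n : nat.
Variable u : {perm 'I_n}.
Variable beta : seq int.
Hypothesis hbeta : all (valid_letter n) beta.

Definition csub (f g : chain n) (b : int) : chain n :=
  Chain (fun c x => clow f c x - b * clow g c x) (fun c x => cupp f c x - b * cupp g c x)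
        (fun c => cbr f c - b * cbr g c).

Lemma relcyc_sub f g b : relcyc u beta f -> relcyc u beta g -> relcyc u beta (csub f g b).
Proof.
case=> [f1 f2 f3 f4 f5] [g1 g2 g3 g4 g5]; split => /=.
- by move=> c x h; rewrite f1 // g1 // mulr0 subr0.
- by move=> c x h; rewrite f2 // g2 // mulr0 subr0.
- by move=> c h; rewrite f3 // g3 // mulr0 subr0.
- by move=> t x h; rewrite f4 // g4 //; case: ifP => _ //; rewrite mulr0 subr0.
- move=> c x h; rewrite btermE /=.
  have := f5 c x h; have := g5 c x h; rewrite !btermE => e1 e2.
  have -> : clow f c x - b * clow g c x - (cupp f c x - b * cupp g c x) +
    (cbr f c - b * cbr g c) * bcoef u beta c x =
    (clow f c x - cupp f c x + cbr f c * bcoef u beta c x)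
     - b * (clow g c x - cupp g c x + cbr g c * bcoef u beta c x) by ring.
  by rewrite e1 e2 mulr0 subr0.
Qed.

Lemma bridgeless_zero f : relcyc u beta f -> (forall t, cbr f t = 0) ->
  forall t x, clow f t x = 0 /\ cupp f t x = 0.
Proof.
case=> [f1 f2 f3 f4 f5] hb.
have step : forall t, (1 <= t <= m beta)%N ->
   ((t < m beta)%N -> forall x, clow f t.+1 x = 0) -> forall x, clow f t x = 0 /\ cupp f t x = 0.
  move=> t ht hn x.
  have hu : cupp f t x = 0.
    rewrite f4 //; case: ifP => // hl; exact: hn.
  split => //.
  have := f5 t x ht; rewrite btermE hb hu mul0r addr0 subr0 => //.
have main : forall k t, (m beta - k <= t)%N -> forall x, clow f t x = 0 /\ cupp f t x = 0.
  elim=> [|k IH] t ht x.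
    case: (boolP (1 <= t <= m beta)%N) => hr; last by rewrite f1 // f2.
    apply: step => // hl; lia.
  case: (boolP (1 <= t <= m beta)%N) => hr; last by rewrite f1 // f2.
  apply: step => // hl y.
  by have [] := IH t.+1 (ltac:(lia)) y.
move=> t x; exact: main (m beta) t (ltac:(lia)) x.
Qed.

End P.


Section P.
Variable n : nat.
Variable u : {perm 'I_n}.
Variable beta : seq int.

Lemma sum_single (G : nat -> int) j : solid u beta j ->
  (forall c, solid u beta c -> c != j -> G c = 0) ->
  \sum_(1 <= c < (m beta).+1 | solid u beta c) G c = G j.
Proof.
move=> hj hz; have hr := solid_range hj.
rewrite big_mkcond (bigD1_seq j) /=; last by rewrite /index_iota iota_uniq.
  rewrite hj big1 ?addr0 // => i hi; case: ifP => // hs; exact: hz.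
by rewrite mem_index_iota; lia.
Qed.

Lemma sum_upd (a F : nat -> int) j b : solid u beta j ->
  \sum_(1 <= c < (m beta).+1 | solid u beta c) (a c + (if c == j then b else 0)) * F c =
  \sum_(1 <= c < (m beta).+1 | solid u beta c) a c * F c + b * F j.
Proof.
move=> hj.
under eq_bigr do rewrite mulrDl.
rewrite big_split /=; congr (_ + _).
rewrite (sum_single (G := fun c => (if c == j then b else 0) * F c) hj) ?eqxx //.
by move=> c _ /negPf ->; rewrite mul0r.
Qed.

End P.

Theorem corollary5p11 (n : nat) (hn : (2 <= n)%N) (beta : seq int)
  (hbeta : all (valid_letter n) beta) (u : {perm 'I_n})
  (hu : u_le_beta u beta) :
  [/\ forall c, solid u beta c -> relcyc u beta (Ccyc u beta c),
      forall f, relcyc u beta f -> exists a : nat -> int, chain_eq f (lincomb u beta a)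
    & forall a : nat -> int, chain_eq (lincomb u beta a) (zero_chain n) ->
        forall c, solid u beta c -> a c = 0%R].
Proof.
have nsol : forall c, (m beta < c)%N -> ~~ solid u beta c.
  move=> c hc; apply/negP => /solid_range; lia.
split.
- move=> c hs; exact: (Ccyc_rel hbeta hs).
- have Q : forall k f, relcyc u beta f -> (forall t, (k < t)%N -> cbr f t = 0) ->
      exists a, chain_eq f (lincomb u beta a).
    elim=> [|k IH] f hf hb.
      have hz : forall t, cbr f t = 0.
        case=> [|t]; last exact: hb.
        by case: hf => _ _ f3 _ _; apply: f3.
      have Z := bridgeless_zero hbeta hf hz.
      exists (fun _ => 0); split => /= [c x|c x|c].
      + by rewrite big1 => [|i _]; [case: (Z c x)|rewrite mul0r].
      + by rewrite big1 => [|i _]; [case: (Z c x)|rewrite mul0r].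
      + by rewrite big1 => [|i _]; [exact: hz|rewrite mul0r].
    case hs: (solid u beta k.+1); last first.
      apply: IH => // t ht; case: (ltngtP k.+1 t) => h; [exact: hb| lia|].
      by case: hf => _ _ f3 _ _; rewrite -h f3 ?hs.
    set b := cbr f k.+1.
    set f' := csub f (Ccyc u beta k.+1) b.
    have hf' : relcyc u beta f' := relcyc_sub b hf (Ccyc_rel hbeta hs).
    have hb' : forall t, (k < t)%N -> cbr f' t = 0.
      have cs : forall t, cbr f' t = cbr f t - b * cbr (Ccyc u beta k.+1) t by [].
      move=> t ht; rewrite cs; case: (ltngtP k.+1 t) => h; [|lia|].
        by rewrite hb // (Ccyc_br_gt u hbeta) // mulr0 subr0.
      by rewrite -h Ccyc_br_eq // mulr1 subrr.
    have [a' [e1 e2 e3]] := IH f' hf' hb'.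
    exists (fun c => a' c + (if c == k.+1 then b else 0)); split => /= [c x|c x|c];
      rewrite sum_upd //.
    + by move: (e1 c x) => /= <-; ring.
    + by move: (e2 c x) => /= <-; ring.
    + by move: (e3 c) => /= <-; ring.
  move=> f hf; apply: (Q (m beta)) => // t ht.
  by case: hf => _ _ f3 _ _; apply: f3; apply: nsol.
- move=> a [_ _ e3].
  have helper : forall c, solid u beta c ->
      (forall c', solid u beta c' -> (c < c')%N -> a c' = 0) -> a c = 0.
    move=> c hs hgt.
    have := e3 c; rewrite /= (sum_single (G := fun c' => a c' * cbr (Ccyc u beta c') c) hs).
      by rewrite Ccyc_br_eq // mulr1.
    move=> c' hs' hne; case: (ltngtP c' c) => h.
    + by rewrite (Ccyc_br_gt u hbeta) // mulr0.
    + by rewrite hgt // mul0r.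
    + by move: hne; rewrite h eqxx.
  have H : forall k c, solid u beta c -> (m beta - k <= c)%N -> a c = 0.
    elim=> [|k IH] c hs hc; apply: helper => // c' hs' hcc'.
      by move: hs'; have := nsol c' (ltac:(lia)) => /negPf ->.
    apply: IH => //; lia.
  move=> c hs; apply: (H (m beta)) => //; lia.
Qed.
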